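(* Let $R$ be an arbitrary unital associative ring and let $J=J_2\circ J_1$ act on $M_3(R)$. Then for every $M\in{\rm dom}(J^3)$ there exist invertible diagonal $3\times 3$ matrices $D_1,D_2$ over $R$ such that $J^3(M)=D_1^{-1}MD_2$.
   Context: $R^*$ denotes the group of units of $R$. $M_n^*(R)$ is the set of invertible $n\times n$ matrices over $R$ (usual product), and $M_n^\star(R)$ is the set of $n\times n$ matrices all of whose entries lie in $R^*$. $J_1(M)=M^{-1}$ with domain $M_n^*(R)$; $J_2(M)$ is the matrix with $(j,k)$-entry $(M_{kj})^{-1}$, with domain $M_n^\star(R)$. For maps $f,g$ the composition $g\circ f$ has domain $\{x\in{\rm dom}(f): f(x)\in{\rm dom}(g)\}$; $J^k$ is the $k$-fold composition of $J$ with this natural domain. *)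

(* Defs.v *)
From mathcomp Require Import all_boot all_order all_algebra.
Set Implicit Arguments. Unset Strict Implicit. Unset Printing Implicit Defensive.
Import GRing.Theory.
Local Open Scope ring_scope.

Section Defs.
Variable R : unitRingType.

Definition is_inv3 (M N : 'M[R]_3) : Prop := M *m N = 1%:M /\ N *m M = 1%:M.

Definition dom_J1 (M : 'M[R]_3) : Prop := exists N, is_inv3 M N.

Definition dom_J2 (M : 'M[R]_3) : Prop := forall i j, M i j \is a GRing.unit.

Definition J2 (M : 'M[R]_3) : 'M[R]_3 := \matrix_(j, k) (M k j)^-1.

(* Graph of the partial map J = J_2 o J_1 : J M M' means M \in dom(J) and
   J(M) = M'.  (J_1(M) = M^{-1} is the unique two-sided inverse.) *)
Definition Jgraph (M M' : 'M[R]_3) : Prop :=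
  exists N, is_inv3 M N /\ dom_J2 N /\ M' = J2 N.
End Defs.

(* Main.v *)
Require Import Defs.
From mathcomp Require Import all_boot all_order all_algebra.
Set Implicit Arguments.
Unset Strict Implicit.
Unset Printing Implicit Defensive.
Import GRing.Theory.
Local Open Scope ring_scope.

Lemma solve3 (R : zmodType) (a b c : R) : a + b + c = 0 -> c = - (a + b).
Proof. by move=> h; apply/eqP; rewrite -addr_eq0 addrC h. Qed.

Lemma solve3l (R : zmodType) (a b c : R) : a + b + c = 0 -> a = - (b + c).
Proof. by move=> h; apply/eqP; rewrite -addr_eq0 addrA h. Qed.

Lemma addi1 (R : zmodType) (a b c : R) : - (a + c) - - (b + c) = b - a.
Proof. by rewrite opprK opprD addrC addrACA addrN addr0 addrC. Qed.

Lemma addi2 (R : zmodType) (a b c : R) : - (c + b) - - (c + a) = a - b.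
Proof. by rewrite opprK opprD addrC addrACA addrN add0r addrC. Qed.

Lemma tele3 (R : zmodType) (a b c : R) : (a - b) + (b - c) + (c - a) = 0.
Proof. by rewrite -!addrA !addKr subrr. Qed.

Lemma locL1 (R : unitRingType) (p1 p2 q1 q2 e0 e1 e2 : R) :
  e0 + p1 * e1 + p2 * e2 = 0 -> e0 + q1 * e1 + q2 * e2 = 0 ->
  (p2 - q2) * e2 = (q1 - p1) * e1.
Proof.
move=> /solve3 hp /solve3 hq.
rewrite mulrBl hp hq !mulrBl.
by rewrite opprK addrC opprD addrACA subrr add0r.
Qed.

Lemma locL2 (R : unitRingType) (c0 c1 c2 p1 p2 q1 q2 : R) :
  p2 \is a GRing.unit -> q2 \is a GRing.unit ->
  c0 + c1 * p1^-1 + c2 * p2^-1 = 0 -> c0 + c1 * q1^-1 + c2 * q2^-1 = 0 ->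
  c0 * (p2 - q2) = c1 * (q1^-1 * q2 - p1^-1 * p2).
Proof.
move=> up2 uq2 /solve3l hp /solve3l hq.
rewrite mulrBr {1}hp hq !mulNr !mulrDl !mulrVK //.
by rewrite addi1 mulrBr !mulrA.
Qed.

Lemma locL3 (R : unitRingType) (c0 c1 c2 p1 p2 q1 q2 : R) :
  p1 \is a GRing.unit -> q1 \is a GRing.unit ->
  c0 + c1 * p1^-1 + c2 * p2^-1 = 0 -> c0 + c1 * q1^-1 + c2 * q2^-1 = 0 ->
  c0 * (q1 - p1) = c2 * (p2^-1 * p1 - q2^-1 * q1).
Proof.
move=> up1 uq1 /solve3l hp /solve3l hq.
rewrite mulrBr {1}hq hp !mulNr !mulrDl !mulrVK //.
by rewrite addi2 mulrBr !mulrA.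
Qed.

Lemma addswap (R : zmodType) (a b c d : R) : a + b = c + d -> a - c = d - b.
Proof. by move=> h; apply: (addIr b); rewrite subrK addrAC h addrAC subrr add0r. Qed.

Lemma locC (R : unitRingType) (c0 c1 c2 p1 p2 q1 q2 : R) :
  c0 + c1 * p1^-1 + c2 * p2^-1 = 0 -> c0 + c1 * q1^-1 + c2 * q2^-1 = 0 ->
  c1 * (p1^-1 - q1^-1) = c2 * (q2^-1 - p2^-1).
Proof.
move=> /solve3l hp /solve3l hq.
have := etrans (esym hp) hq.
move/eqP; rewrite eqr_opp => /eqP h.
by rewrite !mulrBr; apply: addswap.
Qed.

Lemma locL4 (R : unitRingType) (c0 c1 c2 p1 p2 q1 q2 e0 e1 e2 : R) :
  p1 \is a GRing.unit -> p2 \is a GRing.unit ->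
  q1 \is a GRing.unit -> q2 \is a GRing.unit ->
  e0 + p1 * e1 + p2 * e2 = 0 -> e0 + q1 * e1 + q2 * e2 = 0 ->
  c0 + c1 * p1^-1 + c2 * p2^-1 = 0 -> c0 + c1 * q1^-1 + c2 * q2^-1 = 0 ->
  c0 * ((p2 - q2) * e2) = c1 * (p1^-1 - q1^-1) * e0.
Proof.
move=> up1 up2 uq1 uq2 he1 he2 hc1 hc2.
have hs := locL1 he1 he2.
have hC := locC hc1 hc2.
have E1 : c1 * (p1^-1 - q1^-1) * q1 = c1 * (p1^-1 * q1 - 1).
  by rewrite -mulrA mulrBl mulVr.
have E2 : c1 * (p1^-1 - q1^-1) * q2 = c2 * (1 - p2^-1 * q2).
  by rewrite hC -mulrA mulrBl mulVr.
have E3 : c1 * p1^-1 * ((q1 - p1) * e1) = c1 * (p1^-1 * q1 - 1) * e1.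
  by rewrite mulrA -(mulrA c1) mulrBr mulVr.
have E4 : c2 * p2^-1 * ((p2 - q2) * e2) = c2 * (1 - p2^-1 * q2) * e2.
  by rewrite mulrA -(mulrA c2) mulrBr mulVr.
move: hc1 he2 => /solve3l -> /solve3l ->.
rewrite mulNr mulrDl {1}hs E3 E4 mulrN [X in _ = - X]mulrDr !mulrA E1 E2.

done.
Qed.

Lemma elimR (R : unitRingType) (A0 A1 A2 B0 B1 B2 z0 z1 z2 r : R) :
  A0 \is a GRing.unit ->
  A0 * z0 + A1 * z1 + A2 * z2 = 0 -> B0 * z0 + B1 * z1 + B2 * z2 = r ->
  (B1 - B0 * A0^-1 * A1) * z1 + (B2 - B0 * A0^-1 * A2) * z2 = r.
Proof.
move=> uA0 /solve3l hA <-.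
have h : A1 * z1 + A2 * z2 = - (A0 * z0) by rewrite hA opprK.
rewrite !mulrBl addrACA -opprD -!mulrA -!mulrDr h !mulrN mulKr //.
by rewrite opprK addrC addrA.
Qed.


Lemma elimL (R : unitRingType) (a1 a2 b1 b2 e1 e2 P Q W r : R) :
  e1 \is a GRing.unit ->
  a1 * P + b1 * Q + e1 * W = 0 -> a2 * P + b2 * Q + e2 * W = r ->
  (a2 - e2 * e1^-1 * a1) * P + (b2 - e2 * e1^-1 * b1) * Q = r.
Proof.
move=> ue1 /solve3 h1 <-.
have h : a1 * P + b1 * Q = - (e1 * W) by rewrite h1 opprK.
by rewrite !mulrBl addrACA -opprD -!mulrA -!mulrDr h !mulrN mulKr // opprK.
Qed.

Lemma locU (R : unitRingType) (A0 A1 A2 B0 B1 B2 C0 C2 ya1 ya2 yb0 yb1 yb2 e0 e1 e2 : R) :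
  A0 \is a GRing.unit -> e1 \is a GRing.unit ->
  A0 * yb0 + A1 * yb1 + A2 * yb2 = 0 -> B0 * yb0 + B1 * yb1 + B2 * yb2 = 1 ->
  A0 * e0 + A1 * e1 + A2 * e2 = 0 -> B0 * e0 + B1 * e1 + B2 * e2 = 0 ->
  ya1 * A0 + yb1 * B0 + e1 * C0 = 0 -> ya2 * A0 + yb2 * B0 + e2 * C0 = 0 ->
  ya1 * A2 + yb1 * B2 + e1 * C2 = 0 -> ya2 * A2 + yb2 * B2 + e2 * C2 = 1 ->
  (B2 - B0 * A0^-1 * A2) \is a GRing.unit.
Proof.
move=> uA0 ue1 h1 h2 h3 h4 h5 h6 h7 h8.
set S := B2 - B0 * A0^-1 * A2.
set T := yb2 - e2 * e1^-1 * yb1.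
have E1 := elimR uA0 h1 h2.
have E2 := elimR uA0 h3 h4.
have F1 := elimL ue1 h5 h6.
have F2 := elimL ue1 h7 h8.
rewrite -/S -/T in E1 E2 F1 F2.
apply/unitrP; exists T; split.
-
  move: F1 => /eqP; rewrite addr_eq0 => /eqP F1.
  have Ta : ya2 - e2 * e1^-1 * ya1 = - (T * B0) * A0^-1.
    by rewrite -F1 mulrK.
  rewrite Ta in F2.
  by rewrite -F2 /S mulrBr addrC !mulNr !mulrA.
- move: E2 => /eqP; rewrite addr_eq0 => /eqP E2.
  have S1e : B1 - B0 * A0^-1 * A1 = - (S * e2) * e1^-1.
    by rewrite -E2 mulrK.
  rewrite S1e in E1.
  by rewrite -E1 /T mulrBr addrC !mulNr !mulrA.
Qed.

Lemma normE (R : unitRingType) (A0 A1 A2 e0 e1 e2 : R) :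
  A0 \is a GRing.unit -> A0 * e0 + A1 * e1 + A2 * e2 = 0 ->
  e0 + (A0^-1 * A1) * e1 + (A0^-1 * A2) * e2 = 0.
Proof.
move=> u h; have := congr1 (GRing.mul A0^-1) h.
by rewrite mulr0 !mulrDr mulKr // !mulrA.
Qed.

Lemma normC (R : unitRingType) (c0 c1 c2 A0 A1 A2 : R) :
  A0 \is a GRing.unit -> A1 \is a GRing.unit -> A2 \is a GRing.unit ->
  c0 * A0^-1 + c1 * A1^-1 + c2 * A2^-1 = 0 ->
  c0 + c1 * (A0^-1 * A1)^-1 + c2 * (A0^-1 * A2)^-1 = 0.
Proof.
move=> u0 u1 u2 h; have := congr1 (fun x => x * A0) h.
rewrite mul0r !mulrDl mulrVK //.
by rewrite !invrM ?unitrV // !invrK !mulrA.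
Qed.

Lemma loc_all (R : unitRingType) (A0 A1 A2 B0 B1 B2 e0 e1 e2 c0 c1 c2 : R) :
  A0 \is a GRing.unit -> A1 \is a GRing.unit -> A2 \is a GRing.unit ->
  B0 \is a GRing.unit -> B1 \is a GRing.unit -> B2 \is a GRing.unit ->
  e0 \is a GRing.unit -> e1 \is a GRing.unit -> e2 \is a GRing.unit ->
  c0 \is a GRing.unit -> c1 \is a GRing.unit -> c2 \is a GRing.unit ->
  A0 * e0 + A1 * e1 + A2 * e2 = 0 -> B0 * e0 + B1 * e1 + B2 * e2 = 0 ->
  c0 * A0^-1 + c1 * A1^-1 + c2 * A2^-1 = 0 ->
  c0 * B0^-1 + c1 * B1^-1 + c2 * B2^-1 = 0 ->
  let d := c0 * (A0^-1 * A2 - B0^-1 * B2) * e2 in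
  c0^-1 * d * e1^-1 = B0^-1 * B1 - A0^-1 * A1 /\
  c0^-1 * d * e2^-1 = A0^-1 * A2 - B0^-1 * B2 /\
  c1^-1 * d * e0^-1 = (A0^-1 * A1)^-1 - (B0^-1 * B1)^-1 /\
  c1^-1 * d * e2^-1 = (B0^-1 * B1)^-1 * (B0^-1 * B2) - (A0^-1 * A1)^-1 * (A0^-1 * A2) /\
  c2^-1 * d * e0^-1 = (B0^-1 * B2)^-1 - (A0^-1 * A2)^-1 /\
  c2^-1 * d * e1^-1 = (A0^-1 * A2)^-1 * (A0^-1 * A1) - (B0^-1 * B2)^-1 * (B0^-1 * B1).
Proof.
move=> uA0 uA1 uA2 uB0 uB1 uB2 ue0 ue1 ue2 uc0 uc1 uc2 hA hB hcA hcB d.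
have up1 : A0^-1 * A1 \is a GRing.unit by rewrite unitrMr ?unitrV.
have up2 : A0^-1 * A2 \is a GRing.unit by rewrite unitrMr ?unitrV.
have uq1 : B0^-1 * B1 \is a GRing.unit by rewrite unitrMr ?unitrV.
have uq2 : B0^-1 * B2 \is a GRing.unit by rewrite unitrMr ?unitrV.
have he1 := normE uA0 hA.
have he2 := normE uB0 hB.
have hc1 := normC uA0 uA1 uA2 hcA.
have hc2 := normC uB0 uB1 uB2 hcB.
set p1 := A0^-1 * A1 in up1 he1 hc1 *.
set p2 := A0^-1 * A2 in up2 he1 hc1 *.
set q1 := B0^-1 * B1 in uq1 he2 hc2 *.
set q2 := B0^-1 * B2 in uq2 he2 hc2 *.
have hs := locL1 he1 he2.
have h4 := locL4 up1 up2 uq1 uq2 he1 he2 hc1 hc2.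
have hC := locC hc1 hc2.
have h2 := locL2 up2 uq2 hc1 hc2.
have h3 := locL3 up1 uq1 hc1 hc2.
have dE : d = c0 * ((p2 - q2) * e2) by rewrite /d mulrA.
have dE' : d = c0 * (p2 - q2) * e2 by [].
split; [|split; [|split; [|split; [|split]]]].
- by rewrite dE mulKr // hs mulrK.
- by rewrite dE mulKr // mulrK.
- by rewrite dE h4 -(mulrA c1) mulKr // mulrK.
- by rewrite dE' (mulrA c1^-1) mulrK // h2 mulKr.
- by rewrite dE h4 hC -(mulrA c2) mulKr // mulrK.
- by rewrite dE hs (mulrA c0) (mulrA c2^-1) mulrK // h3 mulKr.
Qed.

Definition o0 : 'I_3 := @Ordinal 3 0 isT.
Definition o1 : 'I_3 := @Ordinal 3 1 isT.
Definition o2 : 'I_3 := @Ordinal 3 2 isT.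

Lemma ord3P (i : 'I_3) : i = o0 \/ i = o1 \/ i = o2.
Proof.
case: i => [[|[|[|//]]] Hi]; [left|right;left|right;right]; exact: val_inj.
Qed.

Lemma sum3 (V : nmodType) (F : 'I_3 -> V) : \sum_(k < 3) F k = F o0 + F o1 + F o2.
Proof.
rewrite !big_ord_recl big_ord0 addr0 addrA.
by congr (_ + _ + _); congr F; apply: val_inj.
Qed.

Definition nx (k : 'I_3) : 'I_3 := if k == o0 then o1 else if k == o1 then o2 else o0.
Lemma nx0 : nx o0 = o1. Proof. by []. Qed.
Lemma nx1 : nx o1 = o2. Proof. by []. Qed.
Lemma nx2 : nx o2 = o0. Proof. by []. Qed.

Definition xh (R : unitRingType) (X : 'I_3 -> 'I_3 -> R) (r m : 'I_3) : R :=
  (X r o0)^-1 * X r m.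
Definition dl (R : unitRingType) (X Y K : 'I_3 -> 'I_3 -> R) (k : 'I_3) : R :=
  K k o0 * (xh X (nx k) o2 - xh X (nx (nx k)) o2) * Y o2 k.

Lemma rot3 (V : nmodType) (x y z : V) : x + y + z = y + z + x.
Proof. by rewrite -addrA addrC. Qed.

Lemma tele3' (V : zmodType) (a b c : V) : (a - b) + (c - a) + (b - c) = 0.
Proof. by rewrite (addrC (a - b)) tele3. Qed.

Lemma pq_unit (R : unitRingType) (A0 A2 B0 B2 : R) :
  B0 \is a GRing.unit -> (B2 - B0 * A0^-1 * A2) \is a GRing.unit ->
  (A0^-1 * A2 - B0^-1 * B2) \is a GRing.unit.
Proof.
move=> uB0 uS.
have -> : A0^-1 * A2 - B0^-1 * B2 = - (B0^-1 * (B2 - B0 * A0^-1 * A2)).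
  by rewrite mulrBr -!mulrA mulKr // opprB.
by rewrite unitrN unitrMr ?unitrV.
Qed.

Lemma core (R : unitRingType) (X Y K : 'I_3 -> 'I_3 -> R) :
  (forall i j, \sum_(k < 3) X i k * Y k j = (i == j)%:R) ->
  (forall i j, \sum_(k < 3) Y i k * X k j = (i == j)%:R) ->
  (forall i j, \sum_(k < 3) K i k * (X j k)^-1 = (i == j)%:R) ->
  (forall i j, X i j \is a GRing.unit) ->
  (forall i j, Y i j \is a GRing.unit) ->
  (forall i j, K i j \is a GRing.unit) ->
  (forall k, dl X Y K k \is a GRing.unit) /\
  (forall i j, i != j -> \sum_(k < 3) (K k i)^-1 * dl X Y K k * (Y j k)^-1 = 0).
Proof.
move=> hXY hYX hKH uX uY uK.
have e0 i j : i != j -> X i o0 * Y o0 j + X i o1 * Y o1 j + X i o2 * Y o2 j = 0.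
  by move=> nij; move: (hXY i j); rewrite sum3 (negPf nij).
have e1 i : X i o0 * Y o0 i + X i o1 * Y o1 i + X i o2 * Y o2 i = 1.
  by move: (hXY i i); rewrite sum3 eqxx.
have f0 i j : i != j -> Y i o0 * X o0 j + Y i o1 * X o1 j + Y i o2 * X o2 j = 0.
  by move=> nij; move: (hYX i j); rewrite sum3 (negPf nij).
have f1 i : Y i o0 * X o0 i + Y i o1 * X o1 i + Y i o2 * X o2 i = 1.
  by move: (hYX i i); rewrite sum3 eqxx.
have g0 i j : i != j ->
    K i o0 * (X j o0)^-1 + K i o1 * (X j o1)^-1 + K i o2 * (X j o2)^-1 = 0.
  by move=> nij; move: (hKH i j); rewrite sum3 (negPf nij).
split.
- move=> k; rewrite /dl /xh.
  case: (ord3P k) => [->|[->|->]]; rewrite ?nx0 ?nx1 ?nx2 ?nx0 ?nx1 ?nx2;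
    rewrite unitrMl ?uY // unitrMr ?uK //; apply: pq_unit; rewrite ?uX //.
  + apply: (locU (uX _ _) (uY o1 o0) (e0 o1 o2 isT) (e1 o2) (e0 o1 o0 isT) (e0 o2 o0 isT)).
    * exact: (etrans (esym (rot3 _ _ _)) (f0 o1 o0 isT)).
    * exact: (etrans (esym (rot3 _ _ _)) (f0 o2 o0 isT)).
    * exact: (etrans (esym (rot3 _ _ _)) (f0 o1 o2 isT)).
    * exact: (etrans (esym (rot3 _ _ _)) (f1 o2)).
  + apply: (locU (uX _ _) (uY o1 o1) (e0 o2 o0 isT) (e1 o0) (e0 o2 o1 isT) (e0 o0 o1 isT)).
    * exact: (etrans (rot3 _ _ _) (f0 o1 o0 isT)).
    * exact: (etrans (rot3 _ _ _) (f0 o2 o0 isT)).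
    * exact: (etrans (rot3 _ _ _) (f0 o1 o2 isT)).
    * exact: (etrans (rot3 _ _ _) (f1 o2)).
  + apply: (locU (uX _ _) (uY o1 o2) (e0 o0 o1 isT) (e1 o1) (e0 o0 o2 isT) (e0 o1 o2 isT)).
    * exact: (f0 o1 o0 isT).
    * exact: (f0 o2 o0 isT).
    * exact: (f0 o1 o2 isT).
    * exact: (f1 o2).
- move=> i j nij; rewrite sum3 /dl /xh ?nx0 ?nx1 ?nx2 ?nx0 ?nx1 ?nx2.
  have L0 := loc_all (uX o1 o0) (uX o1 o1) (uX o1 o2) (uX o2 o0) (uX o2 o1) (uX o2 o2)
    (uY o0 o0) (uY o1 o0) (uY o2 o0) (uK o0 o0) (uK o0 o1) (uK o0 o2)
    (e0 o1 o0 isT) (e0 o2 o0 isT) (g0 o0 o1 isT) (g0 o0 o2 isT).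
  have L1 := loc_all (uX o2 o0) (uX o2 o1) (uX o2 o2) (uX o0 o0) (uX o0 o1) (uX o0 o2)
    (uY o0 o1) (uY o1 o1) (uY o2 o1) (uK o1 o0) (uK o1 o1) (uK o1 o2)
    (e0 o2 o1 isT) (e0 o0 o1 isT) (g0 o1 o2 isT) (g0 o1 o0 isT).
  have L2 := loc_all (uX o0 o0) (uX o0 o1) (uX o0 o2) (uX o1 o0) (uX o1 o1) (uX o1 o2)
    (uY o0 o2) (uY o1 o2) (uY o2 o2) (uK o2 o0) (uK o2 o1) (uK o2 o2)
    (e0 o0 o2 isT) (e0 o1 o2 isT) (g0 o2 o0 isT) (g0 o2 o1 isT).
  move: L0 L1 L2 => /= [a01 [a02 [a10 [a12 [a20 a21]]]]]
    [b01 [b02 [b10 [b12 [b20 b21]]]]] [c01 [c02 [c10 [c12 [c20 c21]]]]].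
  case: (ord3P i) nij => [->|[->|->]]; case: (ord3P j) => [->|[->|->]] nij;
    rewrite ?eqxx // in nij.
  + by rewrite a01 b01 c01 tele3'.
  + by rewrite a02 b02 c02 tele3.
  + by rewrite a10 b10 c10 tele3.
  + by rewrite a12 b12 c12 tele3'.
  + by rewrite a20 b20 c20 tele3'.
  + by rewrite a21 b21 c21 tele3.
Qed.


Lemma core_op (R : unitRingType) (X Y K : 'I_3 -> 'I_3 -> R) :
  (forall i j, \sum_(k < 3) X i k * Y k j = (i == j)%:R) ->
  (forall i j, \sum_(k < 3) Y i k * X k j = (i == j)%:R) ->
  (forall i j, \sum_(k < 3) (X k i)^-1 * K k j = (i == j)%:R) ->
  (forall i j, X i j \is a GRing.unit) ->
  (forall i j, Y i j \is a GRing.unit) ->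
  (forall i j, K i j \is a GRing.unit) ->
  exists dc : 'I_3 -> R, (forall k, dc k \is a GRing.unit) /\
  (forall i j, i != j -> \sum_(k < 3) (Y k j)^-1 * dc k * (K i k)^-1 = 0).
Proof.
move=> hXY hYX hHK uX uY uK.
have := @core (R^c) (fun i j => X j i) (fun i j => Y j i) (fun i j => K j i).
case.
- move=> i j; rewrite sum3; move: (hYX j i); rewrite sum3 eq_sym => <-.
  by [].
- move=> i j; rewrite sum3; move: (hXY j i); rewrite sum3 eq_sym => <-.
  by [].
- move=> i j; rewrite sum3; move: (hHK j i); rewrite sum3 eq_sym => <-.
  by [].
- by move=> i j; apply: uX.
- by move=> i j; apply: uY.
- by move=> i j; apply: uK.
move=> uc hc; exists (dl (fun i j => X j i : R^c) (fun i j => Y j i) (fun i j => K j i)).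
split; first exact: uc.
have E : forall a b c : R, ((a : R^c) * (b : R^c)) * (c : R^c) = c * b * a :> R.
  by move=> a b c; exact: (mulrA c b a).
move=> i j nij; move: (hc i j nij); rewrite !sum3 !E.
by [].
Qed.

Definition dmx (R : unitRingType) (f : 'I_3 -> R) : 'M[R]_3 := diag_mx (\row_k f k).

Lemma dmxE3 (R : unitRingType) (P Q : 'M[R]_3) f i j :
  (P *m dmx f *m Q) i j = \sum_(k < 3) P i k * f k * Q k j.
Proof. by rewrite /dmx mul_mx_diag mxE; apply: eq_bigr => k _; rewrite !mxE. Qed.

Lemma dmx_mul1 (R : unitRingType) (f g : 'I_3 -> R) :
  (forall k, f k * g k = 1) -> dmx f *m dmx g = 1%:M.
Proof.
move=> h; rewrite /dmx mulmx_diag -diag_const_mx; congr diag_mx.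
by apply/matrixP => i j; rewrite !mxE.
Qed.

Lemma dmx_is_diag (R : unitRingType) (f : 'I_3 -> R) : is_diag_mx (dmx f).
Proof. exact: diag_mx_is_diag. Qed.

Lemma diag_dmx (R : unitRingType) (A : 'M[R]_3) : is_diag_mx A -> A = dmx (fun i => A i i).
Proof.
move/is_diag_mxP => h; apply/matrixP => i j; rewrite /dmx !mxE.
case: eqVneq => [->|nij]; rewrite ?mulr1n // mulr0n; exact: h.
Qed.

Lemma two_sided (R : unitRingType) (x l r : R) : l * x = 1 -> x * r = 1 -> x \is a GRing.unit.
Proof.
move=> hl hr; have e : l = r by rewrite -[l]mulr1 -hr mulrA hl mul1r.
by apply/unitrP; exists r; split => //; rewrite -e.
Qed.

Unset Implicit Arguments.

Theorem theorem1 (R : unitRingType) (M M1 M2 M3 : 'M[R]_3) :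
  Jgraph M M1 -> Jgraph M1 M2 -> Jgraph M2 M3 ->
  exists D1 D1inv D2 D2inv : 'M[R]_3,
    [/\ is_diag_mx D1, is_diag_mx D2, is_inv3 D1 D1inv, is_inv3 D2 D2inv
      & M3 = D1inv *m M *m D2].
Proof.
move=> [N1 [[hMN1 hN1M] [uN1 eM1]]] [N2 [[hM1N2 hN2M1] [uN2 eM2]]]
  [N3 [[hM2N3 hN3M2] [uN3 eM3]]].
subst M1 M2 M3.
pose Y i j := (N1 j i)^-1.
have uY : forall i j, Y i j \is a GRing.unit by move=> i j; rewrite unitrV.
have hXY : forall i j, \sum_(k < 3) N2 i k * Y k j = (i == j)%:R.
  move=> i j; have := congr1 (fun A : 'M[R]_3 => A i j) hN2M1; rewrite !mxE => <-.
  by apply: eq_bigr => k _; rewrite /J2 mxE.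
have hYX : forall i j, \sum_(k < 3) Y i k * N2 k j = (i == j)%:R.
  move=> i j; have := congr1 (fun A : 'M[R]_3 => A i j) hM1N2; rewrite !mxE => <-.
  by apply: eq_bigr => k _; rewrite /J2 mxE.
have hKH : forall i j, \sum_(k < 3) N3 i k * (N2 j k)^-1 = (i == j)%:R.
  move=> i j; have := congr1 (fun A : 'M[R]_3 => A i j) hN3M2; rewrite !mxE => <-.
  by apply: eq_bigr => k _; rewrite /J2 mxE.
have hHK : forall i j, \sum_(k < 3) (N2 k i)^-1 * N3 k j = (i == j)%:R.
  move=> i j; have := congr1 (fun A : 'M[R]_3 => A i j) hM2N3; rewrite !mxE => <-.
  by apply: eq_bigr => k _; rewrite /J2 mxE.
have [ud hoff] := core hXY hYX hKH uN2 uY uN3.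
have [dc [udc hoffc]] := core_op hXY hYX hHK uN2 uY uN3.
set d := dl (fun i j => N2 i j) Y (fun i j => N3 i j) in ud hoff.
pose Rm := J2 N3 *m dmx d *m N1.
pose Rc := N1 *m dmx dc *m J2 N3.
have dRm : is_diag_mx Rm.
  apply/is_diag_mxP => i j nij; rewrite dmxE3; apply: (etrans _ (hoff i j nij)).
  by apply: eq_bigr => k _; rewrite /J2 mxE /Y invrK.
have dRc : is_diag_mx Rc.
  apply/is_diag_mxP => i j nij; rewrite dmxE3.
  have nji : j != i by rewrite eq_sym.
  apply: (etrans _ (hoffc j i nji)).
  by apply: eq_bigr => k _; rewrite /J2 mxE /Y invrK.
have hRM : Rm *m M = J2 N3 *m dmx d by rewrite /Rm -mulmxA hN1M mulmx1.
have hMR : M *m Rc = dmx dc *m J2 N3 by rewrite /Rc !mulmxA hMN1 mul1mx.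
have ur : forall i, Rm i i \is a GRing.unit.
  move=> i.
  have e1 : Rm i i * M i i = (N3 i i)^-1 * d i.
    have := congr1 (fun A : 'M[R]_3 => A i i) hRM.
    rewrite {1}(diag_dmx dRm) /dmx mul_diag_mx mul_mx_diag !mxE => ->.
    done.
  have e2 : M i i * Rc i i = dc i * (N3 i i)^-1.
    have := congr1 (fun A : 'M[R]_3 => A i i) hMR.
    rewrite {1}(diag_dmx dRc) /dmx mul_diag_mx mul_mx_diag !mxE => ->.
    done.
  have uu : (N3 i i)^-1 * d i \is a GRing.unit by rewrite unitrMr ?unitrV.
  have uv : dc i * (N3 i i)^-1 \is a GRing.unit by rewrite unitrMl ?unitrV.
  have uM : M i i \is a GRing.unit.
    apply: (@two_sided _ _ (((N3 i i)^-1 * d i)^-1 * Rm i i) (Rc i i * (dc i * (N3 i i)^-1)^-1)).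
    - by rewrite -mulrA e1 mulVr.
    - by rewrite mulrA e2 mulrV.
  have -> : Rm i i = (N3 i i)^-1 * d i * (M i i)^-1 by rewrite -e1 mulrK.
  by rewrite unitrMl ?unitrV.
exists (dmx (fun i => (Rm i i)^-1)), Rm, (dmx (fun k => (d k)^-1)), (dmx d).
split.
- exact: dmx_is_diag.
- exact: dmx_is_diag.
- split.
  + rewrite [X in _ *m X](diag_dmx dRm) dmx_mul1 // => k; exact: mulVr (ur k).
  + rewrite [X in X *m _](diag_dmx dRm) dmx_mul1 // => k; exact: mulrV (ur k).
- by split; rewrite dmx_mul1 // => k; [exact: mulVr (ud k) | exact: mulrV (ud k)].
- by rewrite hRM -mulmxA dmx_mul1 ?mulmx1 // => k; exact: mulrV (ud k).
Qed.
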